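(* Let $N\ge2$, let $\mathcal{A}=(a_{i_1\cdots i_N})\in\mathbb{C}^{d_1\times\cdots\times d_N}$, and for each $l\in\{1,\dots,N\}$ let $\mathbf{U}^{(l)}=(u^{(l)}_{i_l'i_l})\in\mathbb{C}^{d_l'\times d_l}$. Let $\mathcal{B}=\mathcal{A}\times_1\mathbf{U}^{(1)}\times_2\cdots\times_N\mathbf{U}^{(N)}\in\mathbb{C}^{d_1'\times\cdots\times d_N'}$. Then for every $k\in\{1,\dots,N-1\}$, $n\in\{1,\dots,k\}$, $m\in\{1,\dots,N-k\}$ and all sequences $R=(r_1,\dots,r_k)$, $C=(c_1,\dots,c_{N-k})$ of distinct integers with $\{r_1,\dots,r_k\}\cup\{c_1,\dots,c_{N-k}\}=\{1,\dots,N\}$, $$\mathbf{B}_{(R,n;C,m)}=\big(\mathbf{U}^{(r_{n+1})}\otimes\cdots\otimes\mathbf{U}^{(r_k)}\otimes\mathbf{U}^{(r_1)}\otimes\cdots\otimes\mathbf{U}^{(r_n)}\big)\,\mathbf{A}_{(R,n;C,m)}\,\big(\mathbf{U}^{(c_{m+1})}\otimes\cdots\otimes\mathbf{U}^{(c_{N-k})}\otimes\mathbf{U}^{(c_1)}\otimes\cdots\otimes\mathbf{U}^{(c_m)}\big)^{\rm T},$$ where $\mathbf{A}_{(R,n;C,m)}$ and $\mathbf{B}_{(R,n;C,m)}$ are the mixed $(R,n;C,m)$-mode matrix unfoldings of $\mathcal{A}$ and $\mathcal{B}$ and $\otimes$ is the Kronecker product.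
   Context: The $k$-mode product of $\mathcal{A}\in\mathbb{C}^{d_1\times\cdots\times d_N}$ with $\mathbf{U}=(u_{i_k'i_k})\in\mathbb{C}^{d_k'\times d_k}$ is the tensor $\mathcal{A}\times_k\mathbf{U}$ of size $d_1\times\cdots\times d_{k-1}\times d_k'\times d_{k+1}\times\cdots\times d_N$ with entries $\sum_{i_k=1}^{d_k}a_{i_1\cdots i_k\cdots i_N}u_{i_k'i_k}$. Index map: for positive integers $D_1,\dots,D_k$, $n\in\{1,\dots,k\}$, $j_s\in\{1,\dots,D_s\}$, $$\iota_n^{(D_1,\dots,D_k)}(j_1,\dots,j_k)=\Big(\prod_{s=1}^{n}D_s\Big)\sum_{s'=n+1}^{k}\Big((j_{s'}-1)\prod_{s''=s'+1}^{k}D_{s''}\Big)+\sum_{s'=1}^{n}\Big((j_{s'}-1)\prod_{s''=s'+1}^{n}D_{s''}\Big)+1$$ (empty products $1$, empty sums $0$). Mixed mode matrix unfolding: for $\mathcal{X}=(x_{i_1\cdots i_N})\in\mathbb{C}^{D_1\times\cdots\times D_N}$ and $R,C,n,m$ as in the claim, $\mathbf{X}_{(R,n;C,m)}\in\mathbb{C}^{(D_{r_1}\cdots D_{r_k})\times(D_{c_1}\cdots D_{c_{N-k}})}$ has entry $x_{i_1\cdots i_N}$ in row $\iota_n^{(D_{r_1},\dots,D_{r_k})}(i_{r_1},\dots,i_{r_k})$ and column $\iota_m^{(D_{c_1},\dots,D_{c_{N-k}})}(i_{c_1},\dots,i_{c_{N-k}})$. *)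

(* Defs.v *)
From HB Require Import structures.
From mathcomp Require Import all_boot all_order all_algebra.
From mathcomp Require Import complex mxtens.
From mathcomp Require Import Rstruct.
From Stdlib Require Import Rdefinitions.

Set Implicit Arguments.
Unset Strict Implicit.
Unset Printing Implicit Defensive.

Import GRing.Theory.

Definition Cplx : comNzRingType := (Rdefinitions.R)[i].

Local Open Scope ring_scope.

Section Tensors.
Variable N : nat.

(* multi-indices of a tensor in C^{D_1 x ... x D_N} (0-based, modes 'I_N) *)
Definition midx (D : 'I_N -> nat) := {dffun forall l : 'I_N, 'I_(D l)}.

Definition tensor (D : 'I_N -> nat) := midx D -> Cplx.

(* working representation: tensors as functions of nat-valued multi-indices
   (only values on the index box are ever used) *)
Definition ntensor := ('I_N -> nat) -> Cplx.

Definition of_tensor (D : 'I_N -> nat) (A : tensor D) : ntensor :=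
  fun i => \sum_(j : midx D | [forall l, (j l : nat) == i l]) A j.

Definition to_tensor (D : 'I_N -> nat) (X : ntensor) : tensor D :=
  fun j => X (fun l => (j l : nat)).

(* entry of a matrix at nat positions (0 outside the matrix) *)
Definition mxn (m n : nat) (U : 'M[Cplx]_(m, n)) (a b : nat) : Cplx :=
  match insub a, insub b with
  | Some a', Some b' => U a' b'
  | _, _ => 0
  end.

Definition mode_product (dk dk' : nat) (k : 'I_N) (X : ntensor)
    (U : 'M[Cplx]_(dk', dk)) : ntensor :=
  fun i => \sum_(j < dk) X (fun l => if l == k then (j : nat) else i l)
                         * mxn U (i k) j.

Definition full_mode_product (d d' : 'I_N -> nat) (A : tensor d)
    (U : forall l : 'I_N, 'M[Cplx]_(d' l, d l)) : tensor d' :=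
  @to_tensor d'
    (foldl (fun X l => @mode_product (d l) (d' l) l X (U l))
       (@of_tensor d A) (enum 'I_N)).

End Tensors.

(* index map iota_n^{(D_1..D_k)}(j_1..j_k), shifted to 0-based values:
   result - 1 with all j_s - 1 *)
Definition iota_idx (n : nat) (D j : seq nat) : nat :=
  ((\prod_(s < n) D`_s)
     * (\sum_(n <= s' < size D) j`_s' * \prod_(s'.+1 <= s'' < size D) D`_s''))%N
  + (\sum_(s' < n) j`_s' * \prod_(s'.+1 <= s'' < n) D`_s'')%N.

Definition dprod N (D : 'I_N -> nat) (s : seq 'I_N) : nat :=
  foldr (fun l a => D l * a)%N 1%N s.

(* mixed mode matrix unfolding X_(R,n;C,m); its size is
   (D_{r_1}...D_{r_k}) x (D_{c_1}...D_{c_{N-k}}), the products being written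
   in the (equal) rotated order so that the Kronecker products typecheck *)
Definition unfold N (D : 'I_N -> nat) (X : tensor D)
    (R : seq 'I_N) (n : nat) (C : seq 'I_N) (m : nat) :
    'M[Cplx]_(dprod D (rot n R), dprod D (rot m C)) :=
  \matrix_(p, q)
    \sum_(i : midx D |
            (iota_idx n (map D R) (map (fun l => (i l : nat)) R) == p)
         && (iota_idx m (map D C) (map (fun l => (i l : nat)) C) == q))
      X i.

Fixpoint kron_seq N (d d' : 'I_N -> nat)
    (U : forall l : 'I_N, 'M[Cplx]_(d' l, d l)) (s : seq 'I_N) :
    'M[Cplx]_(dprod d' s, dprod d s) :=
  match s return 'M[Cplx]_(dprod d' s, dprod d s) with
  | [::] => 1%:M
  | l :: s' => U l *t kron_seq U s'
  end.

(* Main.v *)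
Require Import Defs.
From HB Require Import structures.
From mathcomp Require Import all_boot all_order all_algebra.
From mathcomp Require Import complex mxtens.
Set Implicit Arguments. Unset Strict Implicit.

Definition Pr x0 (D : seq nat) := (\prod_(0 <= t < size D) nth x0 D t)%N.
Definition E x0 (D j : seq nat) :=
  (\sum_(s' < size D) nth x0 j s' * \prod_(s'.+1 <= s'' < size D) nth x0 D s'')%N.

Lemma Pr_cons x0 x D : Pr x0 (x :: D) = (x * Pr x0 D)%N.
Proof. by rewrite /Pr /= big_nat_recl // big_add1 /=. Qed.

Lemma E_cons x0 x D y j : E x0 (x :: D) (y :: j) = (y * Pr x0 D + E x0 D j)%N.
Proof.
rewrite /E /= big_ord_recl /=; congr (_ * _ + _)%N.
  by rewrite /Pr big_add1.
by apply: eq_bigr => i _; rewrite /= big_add1.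
Qed.

Lemma E_nil x0 j : E x0 [::] j = 0%N.
Proof. by rewrite /E big_ord0. Qed.

Lemma Pr_cat x0 D1 D2 : Pr x0 (D1 ++ D2) = (Pr x0 D1 * Pr x0 D2)%N.
Proof.
elim: D1 => [|x D1 IH]; first by rewrite /= [Pr x0 [::]]/Pr big_geq // mul1n.
by rewrite cat_cons !Pr_cons IH mulnA.
Qed.

Lemma E_cat x0 D1 D2 j1 j2 : size j1 = size D1 ->
  E x0 (D1 ++ D2) (j1 ++ j2) = (E x0 D1 j1 * Pr x0 D2 + E x0 D2 j2)%N.
Proof.
elim: D1 j1 => [|x D1 IH] [|y j1] //=; first by rewrite E_nil.
move=> [] hs; rewrite E_cons IH // E_cons Pr_cat.
by rewrite mulnDl addnA mulnA.
Qed.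

Lemma iota_E n D j : n <= size D -> size j = size D ->
  iota_idx n D j = E 0 (rot n D) (rot n j).
Proof.
move=> hn hj.
have -> : iota_idx n D j = ((\prod_(s < n) nth 0 D s) *
   (\sum_(n <= s' < size D) nth 0 j s' * \prod_(s'.+1 <= s'' < size D) nth 0 D s'')
   + \sum_(s' < n) nth 0 j s' * \prod_(s'.+1 <= s'' < n) nth 0 D s'')%N by [].
rewrite /rot E_cat; last by rewrite !size_drop hj.
rewrite mulnC; congr (_ * _ + _)%N.
- rewrite /E size_drop.
  rewrite -{1}[n]add0n big_addn.
  rewrite big_mkord; apply: eq_bigr => i _.
  rewrite nth_drop [(n + i)%N]addnC; congr (_ * _)%N.
  rewrite -addSn big_addn; apply: eq_bigr => t _.
  by rewrite nth_drop addnC.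
- rewrite /Pr size_take_min (minn_idPl hn) big_mkord.
  by apply: eq_bigr => i _; rewrite nth_take.
- rewrite /E size_take_min (minn_idPl hn).
  apply: eq_bigr => i _; rewrite nth_take //; congr (_ * _)%N.
  rewrite !big_nat; apply: eq_bigr => t /andP [_ ht].
  by rewrite nth_take.
Qed.

Definition enc N (D f : 'I_N -> nat) (s : seq 'I_N) := E 0 (map D s) (map f s).

Lemma dprod_Pr N (D : 'I_N -> nat) s : dprod D s = Pr 0 (map D s).
Proof.
elim: s => [|l s IH]; first by rewrite /Pr big_geq.
by rewrite /= Pr_cons -IH.
Qed.

Lemma enc_nil N (D f : 'I_N -> nat) : enc D f [::] = 0.
Proof. exact: E_nil. Qed.

Lemma enc_cons N (D f : 'I_N -> nat) l s :
  enc D f (l :: s) = f l * dprod D s + enc D f s.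
Proof. by rewrite /enc /= E_cons dprod_Pr. Qed.

Lemma enc_lt N (D f : 'I_N -> nat) s : (forall l, f l < D l) ->
  enc D f s < dprod D s.
Proof.
move=> hf; elim: s => [|l s IH]; first by rewrite enc_nil.
rewrite enc_cons /=.
apply: (@leq_trans (f l * dprod D s + dprod D s)); first by rewrite ltn_add2l.
by rewrite -[X in (_ + X)%N]mul1n -mulnDl addn1 leq_mul2r hf orbT.
Qed.

Lemma enc_inj N (D f g : 'I_N -> nat) s : (forall l, f l < D l) ->
  (forall l, g l < D l) -> enc D f s = enc D g s -> forall l, l \in s -> f l = g l.
Proof.
move=> hf hg; elim: s => [|l s IH] //.
rewrite !enc_cons => heq.
have hpos : 0 < dprod D s by apply: leq_ltn_trans (enc_lt s hf).
have h1 : f l = g l.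
  have := congr1 (fun x => x %/ dprod D s) heq.
  by rewrite /= !divnMDl // !divn_small ?addn0 // enc_lt.
have h2 : enc D f s = enc D g s.
  by move: heq; rewrite h1 => /addnI.
by move=> l'; rewrite in_cons => /orP [/eqP -> //| ]; apply: IH.
Qed.

Lemma iota_enc N (D f : 'I_N -> nat) n R : n <= size R ->
  iota_idx n (map D R) (map f R) = enc D f (rot n R).
Proof.
by move=> hn; rewrite iota_E ?size_map // /enc !map_rot.
Qed.
Import GRing.Theory.
Local Open Scope ring_scope.

Lemma mxn_ord m n (M : 'M[Cplx]_(m, n)) (a : 'I_m) (b : 'I_n) (x y : nat) :
  x = a -> y = b -> mxn M x y = M a b.
Proof. by move=> -> ->; rewrite /mxn !valK. Qed.

Lemma kron_enc N (d d' : 'I_N -> nat) (U : forall l : 'I_N, 'M[Cplx]_(d' l, d l))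
    (f g : 'I_N -> nat) s :
  (forall l, (f l < d' l)%N) -> (forall l, (g l < d l)%N) ->
  forall (a : 'I_(dprod d' s)) (b : 'I_(dprod d s)),
  val a = enc d' f s -> val b = enc d g s ->
  kron_seq U s a b = \prod_(l <- s) mxn (U l) (f l) (g l).
Proof.
move=> hf hg; elim: s => [|l s IH] a b ha hb.
  rewrite big_nil /= mxE.
  have -> : a == b by apply/eqP/val_inj; rewrite ha hb.
  by [].
rewrite /= mxE big_cons; f_equal. symmetry; apply: mxn_ord => /=.

    by rewrite ha enc_cons divnMDl ?divn_small ?addn0 ?enc_lt // (leq_ltn_trans _ (enc_lt s hf)).
  by rewrite hb enc_cons divnMDl ?divn_small ?addn0 ?enc_lt // (leq_ltn_trans _ (enc_lt s hg)).
apply: IH => /=.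
  by rewrite ha enc_cons modnMDl modn_small ?enc_lt.
by rewrite hb enc_cons modnMDl modn_small ?enc_lt.
Qed.

Lemma sum_only n (F : 'I_n -> Cplx) (t0 : 'I_n) :
  (forall t, t != t0 -> F t = 0) -> \sum_t F t = F t0.
Proof. move=> h; rewrite (bigD1 t0) // big1; [exact: addr0 | by move=> i /= ne; apply: h]. Qed.

Definition G N (d d' : 'I_N -> nat) (A : tensor d)
  (U : forall l : 'I_N, 'M[Cplx]_(d' l, d l)) (s : seq 'I_N) : ntensor N :=
  fun i => \sum_(j : {dffun forall l : 'I_N, 'I_(d l)} | [forall l, (l \notin s) ==> ((j l : nat) == i l)])
     A j * \prod_(l <- s) mxn (U l) (i l) (j l).

Lemma fold_G N (d d' : 'I_N -> nat) (A : tensor d)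
  (U : forall l : 'I_N, 'M[Cplx]_(d' l, d l)) (s : seq 'I_N) : uniq s ->
  forall i, foldl (fun X l => @mode_product N (d l) (d' l) l X (U l)) (of_tensor A) s i
   = G A U s i.
Proof.
elim/last_ind: s => [|s k IH].
  move=> _ i; rewrite /= /G /of_tensor; apply: eq_big => [j|j _].
    by apply: eq_forallb => l.
  by rewrite big_nil mulr1.
rewrite rcons_uniq => /andP [ks us] i.
rewrite foldl_rcons /mode_product.
under eq_bigr => t _ do rewrite IH //.
rewrite /G [RHS]big_mkcond.
under eq_bigr => t _ do rewrite big_mkcond mulr_suml.
rewrite exchange_big; apply: eq_bigr => j _.
rewrite (@sum_only _ _ (j k : 'I_(d k))); last first.
  move=> t ne; case: ifP; last by rewrite mul0r.
  move=> /forallP /(_ k); rewrite ks eqxx /= => /eqP h.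
  by case/eqP: ne; apply: val_inj.
have -> : [forall l, (l \notin s) ==>
      ((j l : nat) == (if l == k then (j k : nat) else i l))]
    = [forall l, (l \notin rcons s k) ==> ((j l : nat) == i l)].
  apply: eq_forallb => l; rewrite mem_rcons in_cons negb_or.
  case: (l =P k) => [->|/eqP ne]; first by rewrite ks eqxx.
  by [].
case: ifP; last by rewrite mul0r.
move=> _; rewrite big_rcons /= -mulrA; do 2 f_equal.
apply: eq_big_seq => l ls.
by have -> : (l == k) = false by apply/negP => /eqP el; rewrite -el ls in ks.
Qed.

Lemma dprod_big N (D : 'I_N -> nat) s : dprod D s = (\prod_(l <- s) D l)%N.
Proof. by elim: s => [|l s IH]; rewrite ?big_nil ?big_cons //= IH. Qed.

Definition ordE N (D : 'I_N -> nat) (i : midx D) s : 'I_(dprod D s) :=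
  Ordinal (enc_lt s (fun l => ltn_ord (i l))).

Lemma unfold_entry N (D : 'I_N -> nat) (X : tensor D) R n C m p q :
  (n <= size R)%N -> (m <= size C)%N ->
  unfold X R n C m p q =
  \sum_(i : midx D | (enc D (fun l => i l : nat) (rot n R) == p)
                  && (enc D (fun l => i l : nat) (rot m C) == q)) X i.
Proof.
move=> hn hm; rewrite mxE; apply: eq_bigl => i.
by rewrite !iota_enc.
Qed.

Lemma triple_entry (P Q P2 Q2 : nat) (K : 'M[Cplx]_(P, P2)) (M : 'M[Cplx]_(P2, Q2))
  (L : 'M[Cplx]_(Q, Q2)) p q :
  (K *m M *m L^T) p q = \sum_a \sum_b K p a * M a b * L q b.
Proof.
rewrite mxE exchange_big; apply: eq_bigr => a _.
by rewrite mxE big_distrl; apply: eq_bigr => b _; rewrite !mxE.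
Qed.

Unset Implicit Arguments.
Set Strict Implicit.

Theorem theorem3 (N : nat) (hN : (2 <= N)%N) (d d' : 'I_N -> nat)
    (A : tensor d) (U : forall l : 'I_N, 'M[Cplx]_(d' l, d l))
    (k n m : nat) (R C : seq 'I_N) :
  (1 <= k <= N - 1)%N -> (1 <= n <= k)%N -> (1 <= m <= N - k)%N ->
  size R = k -> size C = (N - k)%N -> uniq R -> uniq C ->
  (forall l : 'I_N, (l \in R) || (l \in C)) ->
  unfold (full_mode_product A U) R n C m
  = kron_seq U (rot n R) *m unfold A R n C m *m (kron_seq U (rot m C))^T.
Proof.
move=> /andP [hk1 hk2] /andP [hn1 hn2] /andP [hm1 hm2] sR sC uR uC cov.
have hn : (n <= size R)%N by rewrite sR.
have hm : (m <= size C)%N by rewrite sC.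
have uRC : uniq (R ++ C).
  apply: (@leq_size_uniq _ (enum 'I_N)); first exact: enum_uniq.
    by move=> l _; rewrite mem_cat cov.
  by rewrite size_cat sR sC size_enum_ord subnKC // (leq_trans hk2) // leq_subr.
have hperm : perm_eq (rot n R ++ rot m C) (enum 'I_N).
  apply: (@perm_trans _ (R ++ C)); first by rewrite perm_cat ?perm_rot.
  apply: uniq_perm => //; first exact: enum_uniq.
  by move=> l; rewrite mem_enum mem_cat cov.
have hcov' : forall l, (l \in rot n R) || (l \in rot m C).
  by move=> l; rewrite !mem_rot cov.
pose h (i : midx d') := (ordE i (rot n R), ordE i (rot m C)).
have hinj : injective h.
  move=> i1 i2 [e1 e2].
  have e1' := e1; have e2' := e2.
  apply/ffunP => l; apply: val_inj.
  case/orP: (hcov' l) => hl.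
    exact: (enc_inj (fun l => ltn_ord (i1 l)) (fun l => ltn_ord (i2 l)) e1' hl).
  exact: (enc_inj (fun l => ltn_ord (i1 l)) (fun l => ltn_ord (i2 l)) e2' hl).
have hcard : (#|{: 'I_(dprod d' (rot n R)) * 'I_(dprod d' (rot m C))}| <= #|{: midx d'}|)%N.
  rewrite card_prod !card_ord card_dep_ffun.
  have -> : [seq #|'I_(d' x)| | x : 'I_N] = map d' (enum 'I_N).
    by apply: eq_map => x; rewrite card_ord.
  rewrite !dprod_big -big_cat (perm_big _ hperm) /=.
  by rewrite -dprod_big /dprod foldr_map.
apply/matrixP => p q.
have [i0 hi0] := codomP (inj_card_onto hinj hcard (p, q)).
case: hi0 => hp hq.
rewrite unfold_entry // (big_pred1 i0); last first.
  move=> i /=; apply/idP/eqP => [/andP [/eqP e1 /eqP e2]|->].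
    apply: hinj; rewrite /h -hp -hq; congr (_, _); apply: val_inj => //.
  by rewrite hp hq !eqxx.
rewrite /full_mode_product /to_tensor fold_G ?enum_uniq // /G.
rewrite (eq_bigl (fun _ => true)); last first.
  by move=> j; apply/forallP => l; rewrite mem_enum.
rewrite triple_entry.
rewrite (partition_big (fun i : midx d => ordE i (rot n R)) xpredT) //.
apply: eq_bigr => a _.
rewrite (partition_big (fun i : midx d => ordE i (rot m C)) xpredT) //.
apply: eq_bigr => b _.
rewrite unfold_entry // big_distrr big_distrl /=.
apply: eq_big => [j|j /andP [/eqP ea /eqP eb]].
  by [].
rewrite -ea -eb.
rewrite (@kron_enc N d d' U (fun l => i0 l : nat) (fun l => j l : nat) (rot n R)
   (fun l => ltn_ord (i0 l)) (fun l => ltn_ord (j l)) p (ordE j (rot n R))); last 2 first.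
- by rewrite hp.
- by [].
rewrite (@kron_enc N d d' U (fun l => i0 l : nat) (fun l => j l : nat) (rot m C)
   (fun l => ltn_ord (i0 l)) (fun l => ltn_ord (j l)) q (ordE j (rot m C))); last 2 first.
- by rewrite hq.
- by [].
have -> : \prod_(l <- enum 'I_N) mxn (U l) (i0 l) (j l) =
   (\prod_(l <- rot n R) mxn (U l) (i0 l) (j l)) * (\prod_(l <- rot m C) mxn (U l) (i0 l) (j l)).
  by rewrite -big_cat (perm_big _ hperm).
by rewrite mulrCA mulrA.
Qed.
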